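(* Let ${\cal X}$ be finite, $T$ an irreducible transition matrix on ${\cal X}$ reversible with respect to $\pi$ (i.e. $\pi(x)T(x,y)=\pi(y)T(y,x)$), and $\ddot{\cal X}=\{(x,y):T(x,y)>0\}$. Let $U$ and $U'$ be two families of probability distributions $U_x(y,\cdot)$, $U'_x(y,\cdot)$ on ${\cal X}$ (for $x,y\in{\cal X}$), each satisfying $T(x,y)\,U_x(y,z)=T(x,z)\,U_x(z,y)$ (resp. with $U'$) for all $x,y,z$ with $y\ne z$, and such that $U'_x(y,z)\ge U_x(y,z)$ for all $x,y,z\in{\cal X}$ with $y\neq z$. Define Markov chains on $\ddot{\cal X}$ with transition probabilities $\ddot T((x_0,x_1),(y_0,y_1))=\delta(x_1,y_0)U_{x_1}(x_0,y_1)$ and $\ddot T'((x_0,x_1),(y_0,y_1))=\delta(x_1,y_0)U'_{x_1}(x_0,y_1)$, and assume both are irreducible. For $f:{\cal X}\to\mathbb{R}$, let $\hat\mu_n$ and $\hat\mu'_n$ be the averages of $f$ applied to the second component of the first $n$ states of the $\ddot T$-chain and the $\ddot T'$-chain respectively. Then $\lim_{n\to\infty}n\,\mathrm{Var}(\hat\mu'_n)\le\lim_{n\to\infty}n\,\mathrm{Var}(\hat\mu_n)$.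
   Context: $\delta(a,b)=1$ if $a=b$ and $0$ otherwise. Both chains leave invariant $\ddot\pi(x,y)=\pi(x)T(x,y)$, whose second-component marginal is $\pi$. *)

(* Defs.v *)
From HB Require Import structures.
From mathcomp Require Import all_boot all_order all_algebra.
From mathcomp Require Import boolp classical_sets reals topology normedtype sequences.
Unset Printing Implicit Defensive.
Import Order.TTheory GRing.Theory Num.Theory.
Local Open Scope ring_scope.

Section Chains.
Variables (R : realType) (S : finType).

Definition prob_dist (p : S -> R) : Prop :=
  (forall s, 0 <= p s) /\ \sum_(s : S) p s = 1.

Definition stochastic (P : S -> S -> R) : Prop := forall s, prob_dist (P s).

Fixpoint mpow (P : S -> S -> R) (n : nat) : S -> S -> R :=
  match n with
  | 0 => fun s t => (s == t)%:R
  | m.+1 => fun s t => \sum_(u : S) mpow P m s u * P u t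
  end.

Definition irreducible (P : S -> S -> R) : Prop :=
  forall s t, exists n, 0 < mpow P n s t.

Definition reversible (pi : S -> R) (P : S -> S -> R) : Prop :=
  forall s t, pi s * P s t = pi t * P t s.

Fixpoint chainp (P : S -> S -> R) (x : S) (r : seq S) : R :=
  match r with
  | [::] => 1
  | y :: r' => P x y * chainp P y r'
  end.

Definition pathp (mu : S -> R) (P : S -> S -> R) (w : seq S) : R :=
  match w with
  | [::] => 1
  | x :: r => mu x * chainp P x r
  end.

Definition expect (mu : S -> R) (P : S -> S -> R) (n : nat)
  (F : seq S -> R) : R :=
  \sum_(w : n.-tuple S) pathp mu P w * F w.

Definition avg (g : S -> R) (w : seq S) : R :=
  (\sum_(s <- w) g s) / (size w)%:R.

Definition var_avg (mu : S -> R) (P : S -> S -> R) (g : S -> R) (n : nat) : R :=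
  expect mu P n (fun w => avg g w ^+ 2) - (expect mu P n (avg g)) ^+ 2.

End Chains.

Section Lifted.
Variables (R : realType) (X : finType).

Definition Xdd (T : X -> X -> R) : finType := {p : X * X | 0 < T p.1 p.2}.

Definition lifted (T : X -> X -> R) (U : X -> X -> X -> R)
  (s t : Xdd T) : R :=
  ((val s).2 == (val t).1)%:R * U (val s).2 (val s).1 (val t).2.

Definition pidd (T : X -> X -> R) (pi : X -> R) (s : Xdd T) : R :=
  pi (val s).1 * T (val s).1 (val s).2.

Definition snd_fun (T : X -> X -> R) (f : X -> R) (s : Xdd T) : R :=
  f (val s).2.

End Lifted.

Arguments prob_dist {R S}. Arguments stochastic {R S}. Arguments mpow {R S}.
Arguments irreducible {R S}. Arguments reversible {R S}. Arguments chainp {R S}.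
Arguments pathp {R S}. Arguments expect {R S}. Arguments avg {R S}.
Arguments var_avg {R S}.
Arguments Xdd {R X}. Arguments lifted {R X}. Arguments pidd {R X}.
Arguments snd_fun {R X}.

(* Main.v *)
Require Import Defs.
From HB Require Import structures.
From mathcomp Require Import all_boot all_order all_algebra.
From mathcomp Require Import boolp classical_sets reals topology normedtype sequences.
From mathcomp Require Import ring lra.
Import Order.TTheory GRing.Theory Num.Theory numFieldNormedType.Exports.
Local Open Scope ring_scope.
Local Open Scope classical_set_scope.
Section Gen.
Variables (R : realType) (S : finType).
Implicit Types (P : S -> S -> R).

Lemma sum_tuple_cons n (F : seq S -> R) :
  \sum_(w : n.+1.-tuple S) F w = \sum_(x : S) \sum_(w : n.-tuple S) F (x :: w).
Proof.
rewrite pair_big /=.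
rewrite (reindex (fun p : S * n.-tuple S => [tuple of p.1 :: p.2])) //=.
exists (fun w : n.+1.-tuple S => (thead w, [tuple of behead w])).
  move=> [x w] _ /=; congr pair; apply: val_inj => //.
by move=> w _; rewrite [RHS]tuple_eta.
Qed.

Lemma sum_tuple0 (F : seq S -> R) : \sum_(w : 0.-tuple S) F w = F [::].
Proof. by rewrite (big_pred1 [tuple]) // => w; symmetry; apply/eqP; exact: tuple0. Qed.

Lemma expect_cons mu P n F :
  expect mu P n.+1 F = \sum_x mu x * \sum_(r : n.-tuple S) chainp P x r * F (x :: r).
Proof.
rewrite /expect (sum_tuple_cons n (fun w => pathp mu P w * F w)); apply: eq_bigr => x _.
by rewrite big_distrr; apply: eq_bigr => r _ /=; rewrite mulrA.
Qed.

Lemma chain_cons P x n (F : seq S -> R) :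
  \sum_(r : n.+1.-tuple S) chainp P x r * F r =
  \sum_y P x y * \sum_(r : n.-tuple S) chainp P y r * F (y :: r).
Proof.
rewrite (sum_tuple_cons n (fun r => chainp P x r * F r)); apply: eq_bigr => y _.
by rewrite big_distrr; apply: eq_bigr => r _ /=; rewrite mulrA.
Qed.
End Gen.
Arguments sum_tuple0 {R S}. Arguments sum_tuple_cons {R S}.
Arguments expect_cons {R S}. Arguments chain_cons {R S}.
Section Mom.
Variables (R : realType) (S : finType) (P : S -> S -> R) (pi g : S -> R).
Hypothesis Pst : stochastic P.

Definition Pv (v : S -> R) s := \sum_t P s t * v t.
Definition Ex (v : S -> R) := \sum_s pi s * v s.
Definition ssum (w : seq S) := \sum_(s <- w) g s.
Definition c0 n x := \sum_(r : n.-tuple S) chainp P x r * 1.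
Definition c1 n x := \sum_(r : n.-tuple S) chainp P x r * ssum (x :: r).
Definition c2 n x := \sum_(r : n.-tuple S) chainp P x r * ssum (x :: r) ^+ 2.

Lemma Pv1 s : \sum_t P s t = 1. Proof. by case: (Pst s). Qed.
Lemma P_ge0 s t : 0 <= P s t. Proof. by case: (Pst s). Qed.

Lemma c0E n x : c0 n x = 1.
Proof.
elim: n x => [|n IH] x; first by rewrite /c0 (sum_tuple0 (fun r => chainp P x r * 1)) /= mulr1.
rewrite /c0 (chain_cons P x n (fun _ => 1)) -[RHS](Pv1 x); apply: eq_bigr => y _.
by have := IH y; rewrite /c0 /= => ->; rewrite mulr1.
Qed.

Lemma ssum_cons x r : ssum (x :: r) = g x + ssum r.
Proof. by rewrite /ssum big_cons. Qed.

Lemma c1_0 x : c1 0 x = g x.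
Proof. by rewrite /c1 (sum_tuple0 (fun r => chainp P x r * ssum (x :: r))) /= mul1r ssum_cons /ssum big_nil addr0. Qed.

Lemma c1S n x : c1 n.+1 x = g x + Pv (c1 n) x.
Proof.
rewrite /c1 (chain_cons P x n (fun r => ssum (x :: r))) /Pv.
have -> : g x = \sum_y P x y * g x by rewrite -mulr_suml Pv1 mul1r.
rewrite -big_split /=; apply: eq_bigr => y _; rewrite -mulrDr; congr (_ * _).
have E0 := c0E n y; rewrite /c0 in E0.
have -> : g x = \sum_(r : n.-tuple S) chainp P y r * 1 * g x by rewrite -mulr_suml E0 mul1r.
rewrite -big_split /=; apply: eq_bigr => r _; rewrite !ssum_cons; ring.
Qed.

Lemma c2_0 x : c2 0 x = g x ^+ 2.
Proof. by rewrite /c2 (sum_tuple0 (fun r => chainp P x r * ssum (x :: r) ^+ 2)) /= mul1r ssum_cons /ssum big_nil addr0. Qed.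

Lemma c2S n x : c2 n.+1 x = g x ^+ 2 + 2 * g x * Pv (c1 n) x + Pv (c2 n) x.
Proof.
rewrite /c2 (chain_cons P x n (fun r => ssum (x :: r) ^+ 2)) /Pv.
have -> : g x ^+ 2 = \sum_y P x y * g x ^+ 2 by rewrite -mulr_suml Pv1 mul1r.
rewrite big_distrr -!big_split /=; apply: eq_bigr => y _.
have E0 := c0E n y; rewrite /c0 in E0.
have -> : g x ^+ 2 = \sum_(r : n.-tuple S) chainp P y r * 1 * g x ^+ 2
  by rewrite -mulr_suml E0 mul1r.
rewrite [2 * g x * _]mulrCA -!mulrDr; congr (_ * _).
rewrite /c1 big_distrr -!big_split /=.
apply: eq_bigr => r _; rewrite !ssum_cons; ring.
Qed.

Lemma expect_avg n : expect pi P n.+1 (avg g) = Ex (c1 n) / n.+1%:R.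
Proof.
rewrite expect_cons /Ex mulr_suml; apply: eq_bigr => x _.
rewrite -mulrA; congr (_ * _); rewrite /c1 mulr_suml; apply: eq_bigr => r _.
by rewrite /avg /= size_tuple -/(ssum _) -!mulrA.
Qed.

Lemma expect_avg2 n :
  expect pi P n.+1 (fun w => avg g w ^+ 2) = Ex (c2 n) / n.+1%:R ^+ 2.
Proof.
rewrite expect_cons /Ex mulr_suml; apply: eq_bigr => x _.
rewrite -mulrA; congr (_ * _); rewrite /c2 mulr_suml; apply: eq_bigr => r _.
by rewrite /avg /= size_tuple -/(ssum _) expr_div_n -!mulrA.
Qed.

End Mom.
Arguments Pv {R S}. Arguments Ex {R S}. Arguments ssum {R S}.
Arguments c0 {R S}. Arguments c1 {R S}. Arguments c2 {R S}.
Arguments Pv1 {R S P}. Arguments P_ge0 {R S P}. Arguments c0E {R S P}.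
Arguments c1_0 {R S}. Arguments c1S {R S P g}. Arguments c2_0 {R S}. Arguments c2S {R S P g}.
Arguments expect_avg {R S}. Arguments expect_avg2 {R S}.
Lemma cvg_bdiv (R : realType) (sig M : R) (b : nat -> R) :
  (forall n, `|b n| <= M) -> (fun n => sig + b n / n.+1%:R) @ \oo --> sig.
Proof.
move=> Hb.
have H (c : R) : (fun n : nat => sig + c * harmonic n) @ \oo --> sig.
  rewrite -[X in _ --> X]addr0; apply: cvgD; first exact: cvg_cst.
  by rewrite -(mulr0 c); apply: cvgMl_tmp; exact: cvg_harmonic.
apply: (@squeeze_cvgr _ _ _ R (fun n => sig + (- M) * harmonic n) (fun n => sig + M * harmonic n) _ _ sig (H _) (H _)).
apply: nearW => n /=.
have hp : 0 < n.+1%:R :> R by rewrite ltr0n.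
have := Hb n; rewrite ler_norml => /andP[l1 l2].
rewrite lerD2l lerD2l !ler_pdivrMr //.
by rewrite -!mulrA mulVf ?mulr1 ?gt_eqF //; apply/andP; split.
Qed.
Section Lim.
Variables (R : realType) (S : finType) (P : S -> S -> R) (pi g : S -> R).
Hypothesis Pst : stochastic P.
Hypothesis pistat : forall t, \sum_s pi s * P s t = pi t.
Hypothesis pi1 : \sum_s pi s = 1.

Local Notation Pv := (Pv P).
Local Notation Ex := (Ex pi).
Local Notation c1 := (c1 P g).
Local Notation c2 := (c2 P g).

Lemma Ex_Pv v : Ex (Pv v) = Ex v.
Proof.
rewrite /Ex /Pv.
under eq_bigr do rewrite big_distrr.
rewrite exchange_big /=; apply: eq_bigr => t _.
by rewrite -pistat mulr_suml; apply: eq_bigr => s _; rewrite mulrA.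
Qed.

Lemma Ex_add u v : Ex (fun s => u s + v s) = Ex u + Ex v.
Proof. by rewrite /Ex -big_split; apply: eq_bigr => s _; rewrite mulrDr. Qed.

Lemma Ex_cst c : Ex (fun _ => c) = c.
Proof. by rewrite /Ex -mulr_suml pi1 mul1r. Qed.

Lemma Pv_lin c u v w s :
  Pv (fun t => c + u t + v t - w t) s = c + Pv u s + Pv v s - Pv w s.
Proof.
rewrite /Pv (eq_bigr (fun t => P s t * c + P s t * u t + P s t * v t - P s t * w t));
  last by move=> t _; ring.
by rewrite sumrB !big_split /= -mulr_suml Pv1 // mul1r.
Qed.

Lemma Pv_bound v M s : (forall t, `|v t| <= M) -> `|Pv v s| <= M.
Proof.
move=> H; rewrite /Pv (le_trans (ler_norm_sum _ _ _)) //.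
rewrite -[M]mul1r -(Pv1 Pst s) mulr_suml ler_sum // => t _.
by rewrite normrM ger0_norm ?P_ge0 // ler_wpM2l ?P_ge0.
Qed.

Definition mu := Ex g.

Lemma Ex_c1 n : Ex (c1 n) = n.+1%:R * mu.
Proof.
elim: n => [|n IH].
  by rewrite /Ex; under eq_bigr do rewrite c1_0; rewrite mul1r.
rewrite /Ex; under eq_bigr do rewrite c1S //.
by rewrite -/(Ex _) Ex_add Ex_Pv IH -/mu [in RHS]mulrSr addrC mulrDl mul1r.
Qed.

Variables (h h2 : S -> R).
Hypothesis Hh : forall s, h s - Pv h s = g s - mu.
Hypothesis Hh2 : forall s, h2 s - Pv h2 s = h s.

Fixpoint z n : S -> R := match n with 0 => Pv h2 | n'.+1 => Pv (z n') end.

Lemma c1_form n s : c1 n s = n.+1%:R * mu + h s + z n.+1 s - z n s.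
Proof.
elim: n s => [|n IH] s.
  rewrite c1_0 /=.
  have P0 : Pv (fun _ => 0) s = 0 by rewrite /Pv big1 // => t _; rewrite mulr0.
  have E1 : Pv h s = Pv h2 s - Pv (Pv h2) s.
    have -> : Pv h s = Pv (fun t => 0 + h2 t + 0 - Pv h2 t) s.
      by apply: eq_bigr => t _; rewrite -Hh2 add0r addr0.
    by rewrite Pv_lin P0 add0r addr0.
  have := Hh s; rewrite mul1r; lra.
rewrite c1S //.
have -> : Pv (c1 n) s = Pv (fun t => n.+1%:R * mu + h t + z n.+1 t - z n t) s.
  by apply: eq_bigr => t _; rewrite IH.
rewrite Pv_lin /=.
have := Hh s; rewrite -[n.+2%:R]natr1; lra.
Qed.

Lemma Ex_lin (u v w y : S -> R) c :
  Ex (fun s => u s * (c + v s + w s - y s)) =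
  c * Ex u + Ex (fun s => u s * v s) + Ex (fun s => u s * w s) - Ex (fun s => u s * y s).
Proof.
rewrite /Ex big_distrr -!big_split -sumrB /=; apply: eq_bigr => s _; ring.
Qed.

Definition sig := mu ^+ 2 + 2 * Ex (fun s => g s * h s) - Ex (fun s => g s ^+ 2).
Definition Cc := Ex (fun s => g s ^+ 2) - mu ^+ 2 - sig - 2 * Ex (fun s => g s * z 1 s).

Lemma Ex_c2 n : Ex (c2 n) =
  n.+1%:R ^+ 2 * mu ^+ 2 + n.+1%:R * sig + Cc + 2 * Ex (fun s => g s * z n.+1 s).
Proof.
elim: n => [|n IH].
  have -> : Ex (c2 0) = Ex (fun s => g s ^+ 2) by apply: eq_bigr => s _; rewrite c2_0.
  rewrite /Cc; ring.
have E : forall x, Pv (c1 n) x = c1 n.+1 x - g x by move=> x; rewrite c1S //; ring.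
have -> : Ex (c2 n.+1) = Ex (fun s => g s ^+ 2 + 2 * g s * (n.+2%:R * mu + h s + z n.+2 s - z n.+1 s - g s) + Pv (c2 n) s).
  by apply: eq_bigr => s _; rewrite c2S // E c1_form.
have -> : Ex (fun s => g s ^+ 2 + 2 * g s * (n.+2%:R * mu + h s + z n.+2 s - z n.+1 s - g s) + Pv (c2 n) s)
   = Ex (fun i => g i ^+ 2) + 2 * Ex (fun i => g i * (n.+2%:R * mu + h i + z n.+2 i - z n.+1 i))
   - 2 * Ex (fun i => g i ^+ 2) + Ex (c2 n).
  rewrite -(Ex_Pv (c2 n)); move: (n.+2%:R * mu) => m.
  rewrite /Ex !big_distrr -big_split -sumrB -big_split /=.
  by apply: eq_bigr => s _; ring.
rewrite Ex_lin IH -/mu /sig -[n.+2%:R]natr1; ring.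
Qed.

Lemma var_form n :
  n.+1%:R * var_avg pi P g n.+1 = sig + (Cc + 2 * Ex (fun s => g s * z n.+1 s)) / n.+1%:R.
Proof.
rewrite /var_avg expect_avg2 expect_avg Ex_c1 Ex_c2.
have hp : n.+1%:R != 0 :> R by rewrite pnatr_eq0.
field; by rewrite addrC natr1.
Qed.

Lemma z_bound n s : `|z n s| <= \sum_t `|h2 t|.
Proof.
have hb : forall t, `|h2 t| <= \sum_t `|h2 t|.
  move=> t; rewrite (bigD1 t) //= lerDl sumr_ge0 // => *; exact: normr_ge0.
elim: n s => [|n IH] s /=; exact: Pv_bound.
Qed.

Hypothesis pi_ge0 : forall s, 0 <= pi s.

Lemma lim_var : (fun n : nat => n%:R * var_avg pi P g n) @ \oo --> sig.
Proof.
rewrite -cvg_shiftS (@eq_cvg _ _ _ _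
  (fun n => sig + (Cc + 2 * Ex (fun s => g s * z n.+1 s)) / n.+1%:R)); last first.
  by move=> n /=; rewrite var_form.
set M := \sum_t `|h2 t|.
apply: (@cvg_bdiv R sig (`|Cc| + 2 * \sum_s pi s * `|g s| * M)).
move=> n; rewrite (le_trans (ler_normD _ _)) // lerD2l normrM ger0_norm // ler_pM2l //.
rewrite /Ex (le_trans (ler_norm_sum _ _ _)) // ler_sum // => s _.
rewrite !normrM ger0_norm // -mulrA ler_wpM2l // ler_wpM2l //; exact: z_bound.
Qed.
End Lim.
Lemma sum_ord (R : realType) (S : finType) (F : S -> R) :
  \sum_(i < #|S|) F (enum_val i) = \sum_s F s.
Proof.
rewrite [RHS](reindex (@enum_val S S)) //.
by exists enum_rank => x _; rewrite ?enum_valK ?enum_rankK.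
Qed.
Arguments sum_ord {R S}.

Section Poisson.
Variables (R : realType) (S : finType) (P : S -> S -> R) (pi : S -> R).
Hypothesis Pst : stochastic P.
Hypothesis Pirr : irreducible P.
Hypothesis pistat : forall t, \sum_s pi s * P s t = pi t.
Hypothesis pi1 : \sum_s pi s = 1.

Lemma mpow_ge0 n s t : 0 <= mpow P n s t.
Proof.
elim: n t => [|n IH] t /=; first by rewrite ler0n.
by apply: sumr_ge0 => u _; apply: mulr_ge0; [exact: IH | exact: (P_ge0 Pst)].
Qed.

Lemma mpow_harm (h : S -> R) : (forall s, h s = Pv P h s) ->
  forall n s, h s = \sum_t mpow P n s t * h t.
Proof.
move=> Hh; elim=> [|n IH] s /=.
  rewrite (bigD1 s) //= eqxx mul1r big1 ?addr0 // => t /negbTE.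
  by rewrite eq_sym => ->; rewrite mul0r.
under eq_bigr do rewrite mulr_suml.
rewrite exchange_big /= IH; apply: eq_bigr => u _.
by rewrite Hh /Pv mulr_sumr; apply: eq_bigr => t _; rewrite mulrA.
Qed.

Lemma mpow_sum1 n s : \sum_t mpow P n s t = 1.
Proof.
have Hh : forall x, (fun _ : S => 1 : R) x = Pv P (fun _ => 1) x.
  by move=> x; rewrite /Pv; under eq_bigr do rewrite mulr1; rewrite (Pv1 Pst).
have /= E := mpow_harm _ Hh n s.
by rewrite [RHS]E; apply: eq_bigr => t _; rewrite mulr1.
Qed.

Lemma harm_const (h : S -> R) : (forall s, h s = Pv P h s) -> forall s t, h s = h t.
Proof.
move=> Hh s.
have [s0 _ Hmax] := @arg_maxP _ _ S s xpredT h isT.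
suff E : forall t, h t = h s0 by move=> t; rewrite !E.
move=> t; have [n Hn] := Pirr s0 t.
have E0 : \sum_u mpow P n s0 u * (h s0 - h u) = 0.
  under eq_bigr do rewrite mulrBr.
  by rewrite sumrB -mulr_suml mpow_sum1 mul1r -mpow_harm // subrr.
have Hge : forall u, true -> 0 <= mpow P n s0 u * (h s0 - h u).
  by move=> u _; rewrite mulr_ge0 ?mpow_ge0 // subr_ge0; exact: Hmax.
have /(_ t isT)/eqP := psumr_eq0P Hge E0; rewrite mulf_eq0 gt_eqF //= subr_eq0 => /eqP.
by move=> ->.
Qed.

Lemma poisson (v : S -> R) : Ex pi v = 0 ->
  exists h : S -> R, (forall s, h s - Pv P h s = v s) /\ Ex pi h = 0.
Proof.
move=> Hv.
have [s0 Hs0] : exists s, pi s != 0.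
  case: (pickP (fun s => pi s != 0)) => [s Hs|H]; first by exists s.
  have : \sum_s pi s = 0 by apply: big1 => s _; have /= /negbFE/eqP := H s.
  by rewrite pi1 => /eqP; rewrite oner_eq0.
pose A : 'M[R]_#|S| := \matrix_(i, j) ((i == j)%:R - P (enum_val j) (enum_val i)).
pose pc : 'cV[R]_#|S| := \col_i pi (enum_val i).
pose vr : 'rV[R]_#|S| := \row_i v (enum_val i).
have rowA : forall (u : 'rV[R]_#|S|) s,
    (u *m A) 0 (enum_rank s) = u 0 (enum_rank s) - \sum_t P s t * u 0 (enum_rank t).
  move=> u s; rewrite !mxE.
  under eq_bigr do rewrite mxE mulrBr.
  rewrite sumrB (bigD1 (enum_rank s)) //= eqxx mulr1 big1 ?addr0; last first.
    by move=> i /negbTE ->; rewrite mulr0.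
  congr (_ - _); rewrite -(sum_ord (fun t => P s t * u 0 (enum_rank t))).
  by apply: eq_bigr => i _; rewrite enum_valK enum_rankK mulrC.
have Hker : (kermx A <= (const_mx 1 : 'rV[R]_#|S|))%MS.
  apply/row_subP => i; set u := row i (kermx A).
  have uA : u *m A = 0 by apply/sub_kermxP; exact: row_sub.
  clearbody u.
  have harm : forall s, (fun s => u 0 (enum_rank s)) s = Pv P (fun s => u 0 (enum_rank s)) s.
    move=> s; have := congr1 (fun M : 'rV[R]_#|S| => M 0 (enum_rank s)) uA.
    by rewrite /= rowA !mxE => /eqP; rewrite subr_eq0 => /eqP ->.
  have -> : u = u 0 (enum_rank s0) *: const_mx 1.
    apply/rowP => j; rewrite ![in RHS]mxE mulr1 -{1}(enum_valK j).
    exact: (harm_const _ harm (enum_val j) s0).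
  by rewrite scalemx_sub // submx_refl.
have rk1 : (\rank (kermx A) <= 1)%N by rewrite (leq_trans (mxrankS Hker)) // rank_leq_row.
have rkA : (#|S| - 1 <= \rank A)%N by move: rk1; rewrite mxrank_ker !leq_subLR addnC.
have AK : (A <= kermx pc)%MS.
  apply/sub_kermxP; apply/matrixP => i j; rewrite !mxE.
  under eq_bigr do rewrite !mxE mulrBl.
  rewrite sumrB (bigD1 i) //= eqxx mul1r big1 ?addr0; last first.
    by move=> k /negbTE; rewrite eq_sym => ->; rewrite mul0r.
  rewrite (sum_ord (fun t => P t (enum_val i) * pi t)).
  by under eq_bigr do rewrite mulrC; rewrite pistat subrr.
have rkK : \rank (kermx pc) = (#|S| - 1)%N.
  rewrite mxrank_ker; congr (_ - _)%N; apply/eqP; rewrite eqn_leq rank_leq_col /=.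
  rewrite lt0n mxrank_eq0; apply/eqP => pc0.
  have := congr1 (fun M : 'cV[R]_#|S| => M (enum_rank s0) 0) pc0; rewrite !mxE enum_rankK => E.
  by move: Hs0; rewrite E eqxx.
have KA : (kermx pc <= A)%MS.
  by have := mxrank_leqif_sup AK; case=> Hle <-; rewrite eqn_leq Hle rkK rkA.
have vK : (vr <= kermx pc)%MS.
  apply/sub_kermxP; apply/matrixP => i j; rewrite !mxE.
  under eq_bigr do rewrite !mxE.
  rewrite (sum_ord (fun s => v s * pi s)) -[RHS]Hv /Ex.
  by apply: eq_bigr => s _; rewrite mulrC.
have [u Hu] := submxP (submx_trans vK KA).
pose h0 s := u 0 (enum_rank s).
have Hh0 : forall s, h0 s - Pv P h0 s = v s.
  move=> s; have := congr1 (fun M : 'rV[R]_#|S| => M 0 (enum_rank s)) Hu.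
  by rewrite /= rowA mxE enum_rankK => ->.
set c := Ex pi h0.
exists (fun s => h0 s - c); split.
  move=> s; rewrite -Hh0 /Pv.
  under eq_bigr do rewrite mulrBr.
  rewrite sumrB -mulr_suml (Pv1 Pst) mul1r; lra.
rewrite /Ex.
under eq_bigr do rewrite mulrBr.
by rewrite sumrB -mulr_suml pi1 mul1r subrr.
Qed.
End Poisson.
Section Quad.
Variables (R : realType) (S : finType) (pi : S -> R).

Definition ip (u v : S -> R) := \sum_s pi s * u s * v s.

Lemma ip_ext u v v' : (forall s, v s = v' s) -> ip u v = ip u v'.
Proof. by move=> H; apply: eq_bigr => s _; rewrite H. Qed.
Lemma ip_extl u u' v : (forall s, u s = u' s) -> ip u v = ip u' v.
Proof. by move=> H; apply: eq_bigr => s _; rewrite H. Qed.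
Lemma ipC u v : ip u v = ip v u.
Proof. by apply: eq_bigr => s _; rewrite mulrAC. Qed.
Lemma ipDr u v w : ip u (fun s => v s + w s) = ip u v + ip u w.
Proof. by rewrite /ip -big_split; apply: eq_bigr => s _; rewrite mulrDr. Qed.
Lemma ipDl u v w : ip (fun s => u s + v s) w = ip u w + ip v w.
Proof. by rewrite ipC ipDr ![ip w _]ipC. Qed.
Lemma ipBr u v w : ip u (fun s => v s - w s) = ip u v - ip u w.
Proof. by rewrite /ip -sumrB; apply: eq_bigr => s _; rewrite mulrBr. Qed.

Lemma quad_id (A : S -> S -> R) (r : S -> R) (c : R) (u : S -> R) :
  (forall s t, pi s * A s t = pi t * A t s) -> (forall s, \sum_t A s t = r s) ->
  \sum_s \sum_t pi s * A s t * (u s + c * u t) ^+ 2 =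
  (1 + c ^+ 2) * (\sum_s pi s * r s * u s ^+ 2) + 2 * c * ip u (Pv A u).
Proof.
move=> Asym Ar.
have E1 : \sum_s \sum_t pi s * A s t * u s ^+ 2 = \sum_s pi s * r s * u s ^+ 2.
  apply: eq_bigr => s _; rewrite -Ar mulr_sumr mulr_suml; apply: eq_bigr => t _; ring.
have E2 : \sum_s \sum_t pi s * A s t * u t ^+ 2 = \sum_s pi s * r s * u s ^+ 2.
  rewrite exchange_big /=; apply: eq_bigr => t _; rewrite -Ar mulr_sumr mulr_suml.
  by apply: eq_bigr => s _; rewrite Asym; ring.
have E3 : \sum_s \sum_t pi s * A s t * (u s * u t) = ip u (Pv A u).
  apply: eq_bigr => s _; rewrite /Pv mulr_sumr; apply: eq_bigr => t _; ring.
transitivity (\sum_s \sum_t pi s * A s t * u s ^+ 2 + 2 * c * \sum_s \sum_t pi s * A s t * (u s * u t)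
   + c ^+ 2 * \sum_s \sum_t pi s * A s t * u t ^+ 2).
  rewrite !mulr_sumr -!big_split /=; apply: eq_bigr => s _.
  rewrite !mulr_sumr -!big_split /=; apply: eq_bigr => t _; ring.
rewrite E1 E2 E3; ring.
Qed.
End Quad.
Arguments ip {R S}. Arguments quad_id {R S pi A r}.
Arguments ip_ext {R S pi}. Arguments ip_extl {R S pi}.

Section Saddle.
Variables (R : realType) (S : finType) (pi : S -> R) (Q : S -> S) (K K' : S -> S -> R).
Hypothesis pi_ge0 : forall s, 0 <= pi s.
Hypothesis Qinv : forall s, Q (Q s) = s.
Hypothesis piQ : forall s, pi (Q s) = pi s.
Hypothesis Ksym : forall s t, pi s * K s t = pi t * K t s.
Hypothesis K'sym : forall s t, pi s * K' s t = pi t * K' t s.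
Hypothesis K_ge0 : forall s t, 0 <= K s t.
Hypothesis K'_ge0 : forall s t, 0 <= K' s t.
Hypothesis Ksum : forall s, \sum_t K s t = 1.
Hypothesis K'sum : forall s, \sum_t K' s t = 1.
Hypothesis Pesk : forall s t, s != t -> K s t <= K' s t.

Local Notation ip := (ip pi).
Definition Qv (u : S -> R) s := u (Q s).

Lemma sum_Q (F : S -> R) : \sum_s F (Q s) = \sum_s F s.
Proof.
rewrite [RHS](reindex Q) //; exists Q => s _; exact: Qinv.
Qed.

Lemma ip_Qsym u v : ip u (Qv v) = ip v (Qv u).
Proof.
rewrite /ip -(sum_Q (fun s => pi s * v s * Qv u s)); apply: eq_bigr => s _.
by rewrite /Qv Qinv piQ; ring.
Qed.

Lemma ip_Ksym (A : S -> S -> R) : (forall s t, pi s * A s t = pi t * A t s) ->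
  forall u v, ip u (Pv A v) = ip v (Pv A u).
Proof.
move=> Asym u v; rewrite /ip /Pv.
transitivity (\sum_s \sum_t pi s * A s t * u s * v t).
  by apply: eq_bigr => s _; rewrite mulr_sumr; apply: eq_bigr => t _; ring.
rewrite exchange_big /=; apply: eq_bigr => t _; rewrite mulr_sumr; apply: eq_bigr => s _.
by rewrite Asym; ring.
Qed.

Lemma K_upper (A : S -> S -> R) : (forall s t, pi s * A s t = pi t * A t s) ->
  (forall s t, 0 <= A s t) -> (forall s, \sum_t A s t = 1) -> forall u,
  ip u (Pv A u) <= ip u u /\ - ip u u <= ip u (Pv A u).
Proof.
move=> Asym A0 A1 u.
have ge : forall c, 0 <= \sum_s \sum_t pi s * A s t * (u s + c * u t) ^+ 2.
  move=> c; do 2 (apply: sumr_ge0 => ? _).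
  by apply: mulr_ge0; [apply: mulr_ge0 | rewrite sqr_ge0].
have Eu : \sum_s pi s * 1 * u s ^+ 2 = ip u u.
  by apply: eq_bigr => s _; rewrite mulr1 expr2 mulrA.
have := ge (-1); rewrite (quad_id (-1) u Asym A1) Eu => h1.
have := ge 1; rewrite (quad_id 1 u Asym A1) Eu => h2.
split; nra.
Qed.

Lemma Pesk_le u : ip u (Pv K' u) <= ip u (Pv K u).
Proof.
pose D s t := K s t - K' s t.
have Dsym : forall s t, pi s * D s t = pi t * D t s.
  by move=> s t; rewrite /D !mulrBr Ksym K'sym.
have Dsum : forall s, \sum_t D s t = (fun _ => 0) s.
  by move=> s; rewrite /D sumrB Ksum K'sum subrr.
have := quad_id (-1) u Dsym Dsum.
have -> : \sum_s pi s * (fun _ => 0) s * u s ^+ 2 = 0 by apply: big1 => s _; rewrite mulr0 mul0r.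
have le : \sum_s \sum_t pi s * D s t * (u s + -1 * u t) ^+ 2 <= 0.
  apply: sumr_le0 => s _; apply: sumr_le0 => t _.
  have [->|nst] := eqVneq s t; first by rewrite mulN1r subrr expr0n /= mulr0.
  rewrite -mulrA mulr_ge0_le0 // mulr_le0_ge0 ?sqr_ge0 // /D subr_le0; exact: Pesk.
have -> : ip u (Pv D u) = ip u (Pv K u) - ip u (Pv K' u).
  rewrite -ipBr; apply: ip_ext => s; rewrite /Pv /D -sumrB.
  by apply: eq_bigr => t _; rewrite mulrBl.
move=> E; lra.
Qed.

Definition Bq (A : S -> S -> R) u := ip u (Qv u) - ip u (Pv A u).
Definition Fq (A : S -> S -> R) a u := 2 * ip a u - Bq A u.

Lemma PvD (A : S -> S -> R) u v s : Pv A (fun t => u t + v t) s = Pv A u s + Pv A v s.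
Proof. by rewrite /Pv -big_split; apply: eq_bigr => t _; rewrite mulrDr. Qed.

Lemma F_shift (A : S -> S -> R) : (forall s t, pi s * A s t = pi t * A t s) ->
  forall a w x d, (forall s, Qv w s - Pv A w s = a s) -> (forall s, x s = w s + d s) ->
  Fq A a x = ip a w - Bq A d.
Proof.
move=> Asym a w x d Hw Hx.
rewrite /Fq /Bq.
have E1 : ip x (Qv x) = ip (fun s => w s + d s) (fun s => Qv w s + Qv d s).
  by rewrite (ip_extl _ _ _ Hx); apply: ip_ext => s; rewrite /Qv Hx.
have E2 : ip x (Pv A x) = ip (fun s => w s + d s) (fun s => Pv A w s + Pv A d s).
  rewrite (ip_extl _ _ _ Hx); apply: ip_ext => s; rewrite -PvD.
  by apply: eq_bigr => t _; rewrite Hx.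
have E3 : ip a x = ip a (fun s => w s + d s) by apply: ip_ext.
rewrite E1 E2 E3.
rewrite !ipDr !ipDl.
have Ha : ip d a = ip d (Qv w) - ip d (Pv A w).
  by rewrite -ipBr; apply: ip_ext => s; rewrite Hw.
have Ha' : ip w a = ip w (Qv w) - ip w (Pv A w).
  by rewrite -ipBr; apply: ip_ext => s; rewrite Hw.
rewrite (ip_Qsym w d) (ip_Ksym _ Asym w d) (ipC _ _ _ a d) (ipC _ _ _ a w).
lra.
Qed.

Lemma Bq_even (A : S -> S -> R) d : (forall s t, pi s * A s t = pi t * A t s) ->
  (forall s t, 0 <= A s t) -> (forall s, \sum_t A s t = 1) ->
  (forall s, d (Q s) = d s) -> 0 <= Bq A d.
Proof.
move=> Asym A0 A1 Hd; rewrite /Bq (ip_ext _ (Qv d) d) //.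
have [h1 _] := K_upper _ Asym A0 A1 d; lra.
Qed.

Lemma Bq_odd (A : S -> S -> R) d : (forall s t, pi s * A s t = pi t * A t s) ->
  (forall s t, 0 <= A s t) -> (forall s, \sum_t A s t = 1) ->
  (forall s, d (Q s) = - d s) -> Bq A d <= 0.
Proof.
move=> Asym A0 A1 Hd; rewrite /Bq (ip_ext _ (Qv d) (fun s => - d s)) //.
have -> : ip d (fun s => - d s) = - ip d d.
  by rewrite /ip -sumrN; apply: eq_bigr => s _; rewrite mulrN.
have [_ h2] := K_upper _ Asym A0 A1 d; lra.
Qed.

Lemma saddle a w w' : (forall s, Qv w s - Pv K w s = a s) ->
  (forall s, Qv w' s - Pv K' w' s = a s) -> ip a w' <= ip a w.
Proof.
move=> Hw Hw'.
pose x s := (w' s + w' (Q s)) / 2 + (w s - w (Q s)) / 2.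
pose d1 s := (w s - w (Q s)) / 2 - (w' s - w' (Q s)) / 2.
pose d2 s := (w' s + w' (Q s)) / 2 - (w s + w (Q s)) / 2.
have e1 : Fq K' a x = ip a w' - Bq K' d1 by apply: F_shift => // s; rewrite /x /d1; field.
have e2 : Fq K a x = ip a w - Bq K d2 by apply: F_shift => // s; rewrite /x /d2; field.
have o1 : Bq K' d1 <= 0 by apply: Bq_odd => // s; rewrite /d1 Qinv; field.
have o2 : 0 <= Bq K d2 by apply: Bq_even => // s; rewrite /d2 Qinv; field.
have o3 : Fq K' a x <= Fq K a x by rewrite /Fq /Bq; have := Pesk_le x; lra.
lra.
Qed.

Lemma ip_aQw a w : (forall s, Pv K a s = a s) -> (forall s, Qv w s - Pv K w s = a s) ->
  ip a (Qv w) = ip a a + ip a w.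
Proof.
move=> Ka Hw.
rewrite (ip_ext _ (Qv w) (fun s => a s + Pv K w s)); last by move=> s; rewrite -Hw; ring.
rewrite ipDr (ip_Ksym _ Ksym a w) (ip_ext _ (Pv K a) a) // ipC //.
Qed.
End Saddle.
Arguments Qv {R S}.
Section Base.
Variables (R : realType) (X : finType) (T : X -> X -> R) (pi : X -> R).
Hypothesis Tst : stochastic T.
Hypothesis Tirr : irreducible T.
Hypothesis pid : prob_dist pi.
Hypothesis rev : reversible pi T.

Lemma T_ge0 x y : 0 <= T x y. Proof. by case: (Tst x). Qed.
Lemma pi_ge0 x : 0 <= pi x. Proof. by case: pid. Qed.

Lemma pi_stat y : \sum_x pi x * T x y = pi y.
Proof.
under eq_bigr do rewrite rev.
by rewrite -mulr_sumr (Pv1 Tst) mulr1.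
Qed.

Lemma pi_pos x : 0 < pi x.
Proof.
have [x0 Hx0] : exists x, pi x != 0.
  case: (pickP (fun s => pi s != 0)) => [s Hs|H]; first by exists s.
  have : \sum_s pi s = 0 by apply: big1 => s _; have /= /negbFE/eqP := H s.
  by case: pid => _ ->; move/eqP; rewrite oner_eq0.
have [n Hn] := Tirr x0 x.
have Hst : forall m y, \sum_z pi z * mpow T m z y = pi y.
  elim=> [|m IH] y /=.
    rewrite (bigD1 y) //= eqxx mulr1 big1 ?addr0 // => z /negbTE ->; exact: mulr0.
  under eq_bigr do rewrite mulr_sumr.
  rewrite exchange_big /= -[RHS]pi_stat; apply: eq_bigr => u _.
  by rewrite -IH mulr_suml; apply: eq_bigr => z _; rewrite mulrA.
rewrite -(Hst n x) (bigD1 x0) //= ltr_wpDr //.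
  by apply: sumr_ge0 => z _; apply: mulr_ge0; [exact: pi_ge0 | exact: mpow_ge0].
by rewrite mulr_gt0 // lt_def Hx0 pi_ge0.
Qed.

Lemma T_sym_pos x y : 0 < T x y -> 0 < T y x.
Proof.
move=> H; have : 0 < pi y * T y x by rewrite -rev mulr_gt0 // pi_pos.
by rewrite pmulr_rgt0 // pi_pos.
Qed.

Local Notation S := (Xdd T).

Definition Qd (s : S) : S := insubd s ((val s).2, (val s).1).

Lemma valQ s : val (Qd s) = ((val s).2, (val s).1).
Proof. by rewrite /Qd insubdK //=; apply: T_sym_pos; exact: (valP s). Qed.

Lemma QdK s : Qd (Qd s) = s.
Proof. by apply: val_inj; rewrite !valQ /=; case: (val s). Qed.

Lemma sum_Xdd (F : X * X -> R) : (forall p, ~~ (0 < T p.1 p.2) -> F p = 0) ->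
  \sum_(s : S) F (val s) = \sum_x \sum_y F (x, y).
Proof.
move=> H0.
have -> : \sum_(s : S) F (val s) = \sum_(p | 0 < T p.1 p.2) F p.
  symmetry; rewrite (reindex_omap (val : S -> X * X) insub); last first.
    by move=> p Hp; rewrite insubT.
  by apply: eq_bigl => -[p Hp] /=; rewrite insubT ?Hp /=; apply/eqP; congr Some; apply: val_inj.
rewrite pair_big /= big_mkcond /=; apply: eq_bigr => -[x y] _ /=.
by case: ifP => // Hn; rewrite H0 // Hn.
Qed.

Lemma sum_delta (c : X) (G : X -> R) : \sum_x (c == x)%:R * G x = G c.
Proof.
rewrite (bigD1 c) //= eqxx mul1r big1 ?addr0 // => x /negbTE.
by rewrite eq_sym => ->; rewrite mul0r.
Qed.

Lemma T0 p : ~~ (0 < T p.1 p.2) -> T p.1 p.2 = 0.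
Proof. by move=> H; apply/eqP; rewrite eq_le leNgt H /=; exact: T_ge0. Qed.

Definition gd (f : X -> R) := snd_fun T f.
Definition pd := pidd T pi.

Lemma pd_ge0 s : 0 <= pd s.
Proof. by rewrite /pd /pidd mulr_ge0 ?pi_ge0 ?T_ge0. Qed.

Lemma pd_sum : \sum_s pd s = 1.
Proof.
rewrite /pd /pidd (sum_Xdd (fun p => pi p.1 * T p.1 p.2)); last first.
  by move=> p Hp; rewrite T0 // mulr0.
rewrite /=; under eq_bigr do rewrite -mulr_sumr (Pv1 Tst) mulr1.
by case: pid.
Qed.

Lemma pdQ s : pd (Qd s) = pd s.
Proof. by rewrite /pd /pidd valQ /= rev. Qed.

Section Lift.
Variable U : X -> X -> X -> R.
Hypothesis HU : forall x y, prob_dist (U x y).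
Hypothesis Hdb : forall x y z, y != z -> T x y * U x y z = T x z * U x z y.

Lemma U_ge0 x y z : 0 <= U x y z. Proof. by case: (HU x y). Qed.
Lemma U_sum x y : \sum_z U x y z = 1. Proof. by case: (HU x y). Qed.

Lemma Hdb' x y z : T x y * U x y z = T x z * U x z y.
Proof. by have [->|] := eqVneq y z; [|exact: Hdb]. Qed.

Lemma U_zero x y z : 0 < T x y -> ~~ (0 < T x z) -> U x y z = 0.
Proof.
move=> Hy Hz0; have /= Hz := T0 (x, z) Hz0.
have := Hdb' x y z; rewrite Hz mul0r => /eqP; rewrite mulf_eq0 gt_eqF //= => /eqP //.
Qed.

Local Notation P := (lifted T U).

Lemma P_st : stochastic P.
Proof.
move=> s; split.
  by move=> t; rewrite /lifted mulr_ge0 ?ler0n ?U_ge0.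
rewrite /lifted (sum_Xdd (fun p => ((val s).2 == p.1)%:R * U (val s).2 (val s).1 p.2)) /=.
  under eq_bigr do rewrite -mulr_sumr.
  by rewrite sum_delta U_sum.
move=> [a b] /= Hab; have [E|] := eqVneq (val s).2 a; last by move=> _; rewrite mul0r.
rewrite U_zero ?mulr0 //; first by apply: T_sym_pos; exact: (valP s).
by rewrite E.
Qed.

Lemma P_stat t : \sum_s pd s * P s t = pd t.
Proof.
rewrite /pd /pidd /lifted.
rewrite (sum_Xdd (fun p => pi p.1 * T p.1 p.2 * ((p.2 == (val t).1)%:R * U p.2 p.1 (val t).2))); last first.
  by move=> p Hp; rewrite T0 // mulr0 mul0r.
rewrite /=.
have -> : \sum_x \sum_y pi x * T x y * ((y == (val t).1)%:R * U y x (val t).2)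
  = \sum_x pi x * T x (val t).1 * U (val t).1 x (val t).2.
  apply: eq_bigr => x _.
  rewrite -(sum_delta (val t).1 (fun y => pi x * T x y * U y x (val t).2)).
  by apply: eq_bigr => y _; rewrite eq_sym; ring.
under eq_bigr do rewrite rev -mulrA Hdb' mulrA.
by rewrite -mulr_sumr U_sum mulr1.
Qed.

Definition Kd (s t : S) := P s (Qd t).

Lemma Kd_sym s t : pd s * Kd s t = pd t * Kd t s.
Proof.
rewrite /pd /pidd /Kd /lifted !valQ /=.
case: (val s) => s1 s2; case: (val t) => t1 t2 /=.
have [<-|ne] := eqVneq s2 t2; last by rewrite !mul0r !mulr0.
rewrite mul1r mul1r rev [pi t1 * _]rev -!mulrA; congr (_ * _); exact: Hdb'.
Qed.

Lemma Kd_ge0 s t : 0 <= Kd s t. Proof. by case: (P_st s) => H _; exact: H. Qed.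

Lemma Kd_sum s : \sum_t Kd s t = 1.
Proof. by rewrite /Kd (sum_Q _ _ _ QdK (fun t => P s t)); case: (P_st s). Qed.

Lemma Pv_PK v s : Pv P v s = Pv Kd (Qv Qd v) s.
Proof. by rewrite /Pv -(sum_Q _ _ _ QdK (fun t => P s t * v t)). Qed.

Lemma Kd_a (f : X -> R) c s : Pv Kd (fun t => gd f t - c) s = gd f s - c.
Proof.
rewrite /Pv /Kd -(sum_Q _ _ _ QdK (fun t => P s (Qd t) * (gd f t - c))).
under eq_bigr do rewrite QdK.
transitivity (\sum_t P s t * (gd f s - c)).
  apply: eq_bigr => t _; rewrite /gd /snd_fun valQ /lifted /=.
  by case: eqP => [->|_]; rewrite ?mul0r.
by rewrite -mulr_suml; case: (P_st s) => _ ->; rewrite mul1r.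
Qed.
End Lift.

Lemma Kd_pesk (U U' : X -> X -> X -> R) :
  (forall x y z, y != z -> U x y z <= U' x y z) ->
  forall s t, s != t -> Kd U s t <= Kd U' s t.
Proof.
move=> H s t nst; rewrite /Kd /lifted !valQ /=.
have [E|ne] := eqVneq (val s).2 (val t).2; last by rewrite !mul0r.
rewrite !mul1r; apply: H; apply: contra nst => /eqP E1; apply/eqP/val_inj.
by rewrite [val s]surjective_pairing [val t]surjective_pairing E E1.
Qed.
End Base.
Arguments pd_ge0 {R X T pi}. Arguments pd_sum {R X T pi}.
Arguments P_st {R X T pi} _ _ _ _ {U}. Arguments P_stat {R X T pi} _ _ {U}.
Arguments Kd_sym {R X T pi} _ _ _ _ {U}. Arguments Kd_ge0 {R X T pi} _ _ _ _ {U}.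
Arguments Kd_sum {R X T pi} _ _ _ _ {U}. Arguments Kd_a {R X T pi} _ _ _ _ {U}.
Arguments Pv_PK {R X T pi}. Arguments pdQ {R X T pi}. Arguments QdK {R X T pi}.
Arguments Kd_pesk {R X T pi} _ _ _ _ {U U'}.
Arguments poisson {R S P pi}. Arguments lim_var {R S P pi g}.
Arguments saddle {R S pi Q K K'}. Arguments ip_aQw {R S pi Q K}.
Theorem mainTheorem3 (R : realType) (X : finType) (T : X -> X -> R)
  (pi : X -> R) (U U' : X -> X -> X -> R) (f : X -> R) :
  stochastic T -> irreducible T -> prob_dist pi -> reversible pi T ->
  (forall x y, prob_dist (U x y)) -> (forall x y, prob_dist (U' x y)) ->
  (forall x y z, y != z -> T x y * U x y z = T x z * U x z y) ->
  (forall x y z, y != z -> T x y * U' x y z = T x z * U' x z y) ->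
  (forall x y z, y != z -> U x y z <= U' x y z) ->
  irreducible (lifted T U) -> irreducible (lifted T U') ->
  exists l l' : R,
    (fun n : nat => n%:R * var_avg (pidd T pi) (lifted T U) (snd_fun T f) n)
      @ \oo --> l /\
    (fun n : nat => n%:R * var_avg (pidd T pi) (lifted T U') (snd_fun T f) n)
      @ \oo --> l' /\
    l' <= l.
Proof.
move=> Tst Tirr pid rev HU HU' Hdb Hdb' HUU' Pirr P'irr.
pose g := snd_fun T f.
pose p := pidd T pi.
pose m := Ex p g.
pose a s := g s - m.
have p0 : forall s, 0 <= p s := pd_ge0 Tst pid.
have p1 : \sum_s p s = 1 := pd_sum Tst pid.
have Ea : Ex p a = 0.
  rewrite /Ex; under eq_bigr do rewrite /a mulrBr.
  by rewrite sumrB -mulr_suml p1 mul1r subrr.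
have Pst := P_st Tst Tirr pid rev HU Hdb.
have P'st := P_st Tst Tirr pid rev HU' Hdb'.
have Pstat := P_stat Tst rev HU Hdb.
have P'stat := P_stat Tst rev HU' Hdb'.
have [h [Hh Eh]] := poisson Pst Pirr Pstat p1 _ Ea.
have [h2 [Hh2 _]] := poisson Pst Pirr Pstat p1 _ Eh.
have [h' [Hh' Eh']] := poisson P'st P'irr P'stat p1 _ Ea.
have [h2' [Hh2' _]] := poisson P'st P'irr P'stat p1 _ Eh'.
exists (sig _ _ p g h), (sig _ _ p g h'); split; first exact: (@lim_var _ _ _ p g Pst Pstat h h2 Hh Hh2 p0).
split; first exact: (@lim_var _ _ _ p g P'st P'stat h' h2' Hh' Hh2' p0).
suff : Ex p (fun s => g s * h' s) <= Ex p (fun s => g s * h s) by rewrite /sig; lra.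
have Eg : forall k, Ex p k = 0 -> Ex p (fun s => g s * k s) = ip p a k.
  move=> k Ek; rewrite -[RHS]addr0 -[X in _ + X](mulr0 m) -Ek /Ex /ip mulr_sumr -big_split /=.
  by apply: eq_bigr => s _; rewrite /a; ring.
rewrite !Eg //.
pose Q := Qd R X T.
have QK : forall s, Q (Q s) = s := QdK Tst Tirr pid rev.
pose w := Qv Q h. pose w' := Qv Q h'.
have Hw : forall s, Qv Q w s - Pv (Kd R X T U) w s = a s.
  by move=> s; rewrite /w /Qv QK -(Pv_PK Tst Tirr pid rev) Hh.
have Hw' : forall s, Qv Q w' s - Pv (Kd R X T U') w' s = a s.
  by move=> s; rewrite /w' /Qv QK -(Pv_PK Tst Tirr pid rev) Hh'.
have Ka : forall s, Pv (Kd R X T U) a s = a s := Kd_a Tst Tirr pid rev HU Hdb f m.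
have Ka' : forall s, Pv (Kd R X T U') a s = a s := Kd_a Tst Tirr pid rev HU' Hdb' f m.
have Ksym := Kd_sym Tst Tirr pid rev Hdb.
have K'sym := Kd_sym Tst Tirr pid rev Hdb'.
have -> : ip p a h = ip p a (Qv Q w) by apply: ip_ext => s; rewrite /w /Qv QK.
have -> : ip p a h' = ip p a (Qv Q w') by apply: ip_ext => s; rewrite /w' /Qv QK.
rewrite (ip_aQw Ksym _ _ Ka Hw) (ip_aQw K'sym _ _ Ka' Hw') lerD2l.
apply: (saddle p0 QK (pdQ Tst Tirr pid rev) Ksym K'sym
  (Kd_ge0 Tst Tirr pid rev HU Hdb) (Kd_ge0 Tst Tirr pid rev HU' Hdb')
  (Kd_sum Tst Tirr pid rev HU Hdb) (Kd_sum Tst Tirr pid rev HU' Hdb')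
  (Kd_pesk Tst Tirr pid rev HUU') _ _ _ Hw Hw').
Qed.
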